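(* Let $n\ge 3$, let $g:[1,\lfloor n/2\rfloor]\to\mathbb{R}$ be strictly decreasing and strictly convex, and let $A$ be a set of $m$ vertices of $C_n$. Then $A$ is a minimizer of $E_g$ (on $C_n$) if and only if $A$ is maximally even.
   Context: The cycle $C_n$ has vertex set $\{0,\dots,n-1\}$ with $i$ adjacent to $i+1\bmod n$, and $\lfloor n/2\rfloor$ is its diameter. For a finite simple connected graph $G$, $d(u,v)$ is the shortest-path distance, and for a set $A$ of vertices, $E_g(A)=\sum_{\{u,v\}\subseteq A,\,u\ne v} g(d(u,v))$ (sum over unordered pairs; $E_g(A)=0$ if $|A|\le1$). $A$ is a minimizer of a function $F$ on subsets of $V(G)$ if $F(A)=\min\{F(B): B\subseteq V(G), |B|=|A|\}$. The clockwise distance $d^*(u,v)$ is the least non-negative integer congruent to $v-u$ mod $n$. For $A=\{a_0<\dots<a_{m-1}\}$, $\mathrm{span}_A(a_i,a_j)$ is the least positive integer congruent to $j-i$ mod $m$, and $\sigma^*_k(A)$ is the multiset $[\,d^*(u,v): u,v\in A, u\neq v, \mathrm{span}_A(u,v)=k\,]$. $A$ is maximally even if for each $1\le k\le m-1$ the set of values of $\sigma^*_k(A)$ is a single integer or two consecutive integers. *)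

(* Defs.v *)
From mathcomp Require Import all_boot all_order all_algebra.
From mathcomp Require Import reals.
Set Implicit Arguments. Unset Strict Implicit. Unset Printing Implicit Defensive.
Import Order.TTheory GRing.Theory Num.Theory.

(* Vertices of the cycle C_n are 'I_n; i ~ i+1 mod n. *)

Definition cdist (n : nat) (u v : 'I_n) : nat := (v + (n - u)) %% n.

Definition cycdist (n : nat) (u v : 'I_n) : nat := minn (cdist u v) (cdist v u).

Local Open Scope ring_scope.

Definition energy (R : realType) (n : nat) (g : R -> R) (A : {set 'I_n}) : R :=
  \sum_(u in A) \sum_(v in A | (u < v)%N) g (cycdist u v)%:R.

Definition is_minimizer (R : realType) (n : nat) (g : R -> R) (A : {set 'I_n}) :=
  forall B : {set 'I_n}, #|B| = #|A| -> energy g A <= energy g B.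

Local Close Scope ring_scope.

(* index i of a = a_i in the increasing enumeration a_0 < ... < a_{m-1} of A *)
Definition rank_in (n : nat) (A : {set 'I_n}) (a : 'I_n) : nat :=
  #|[set b in A | (b < a)%N]|.

Definition span_in (n : nat) (A : {set 'I_n}) (u v : 'I_n) : nat :=
  let m := #|A| in
  let r := (rank_in A v + (m - rank_in A u)) %% m in
  if r == 0 then m else r.

Definition sigma_vals (n : nat) (A : {set 'I_n}) (k : nat) : pred nat :=
  fun d => [exists u in A, exists v in A,
             [&& u != v, span_in A u v == k & cdist u v == d]].

Definition maximally_even (n : nat) (A : {set 'I_n}) : Prop :=
  forall k, 1 <= k <= #|A| - 1 ->
    (exists c, forall d, sigma_vals A k d -> d = c)
    \/ (exists c, (forall d, sigma_vals A k d -> d = c \/ d = c.+1)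
                  /\ sigma_vals A k c /\ sigma_vals A k c.+1).

Local Open Scope ring_scope.

Definition in_itv (R : realType) (a b x : R) := a <= x <= b.

Definition strictly_decreasing_on (R : realType) (a b : R) (g : R -> R) :=
  forall x y, in_itv a b x -> in_itv a b y -> x < y -> g y < g x.

Definition strictly_convex_on (R : realType) (a b : R) (g : R -> R) :=
  forall x y t, in_itv a b x -> in_itv a b y -> x != y -> 0 < t -> t < 1 ->
    g (t * x + (1 - t) * y) < t * g x + (1 - t) * g y.

(* Main.v *)
Require Import Defs.
From mathcomp Require Import all_boot all_order all_algebra.
From mathcomp Require Import reals.
Import Order.TTheory GRing.Theory Num.Theory.
From mathcomp Require Import zify ring lra.
Set Implicit Arguments. Unset Strict Implicit. Unset Printing Implicit Defensive.

Lemma cdistE n (u v : 'I_n) :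
  cdist u v = if (u <= v)%N then (v - u)%N else (v + n - u)%N.
Proof.
rewrite /cdist; have := ltn_ord u; have := ltn_ord v.
case: (leqP u v) => H Hv Hu.
  have -> : (v + (n - u) = (v - u) + n)%N by lia.
  by rewrite modnDr modn_small //; lia.
by rewrite modn_small; lia.
Qed.

Lemma cdist_lt n (u v : 'I_n) : (cdist u v < n)%N.
Proof. rewrite cdistE; have := ltn_ord u; have := ltn_ord v; case: (leqP u v); lia. Qed.

Lemma cdist_pos n (u v : 'I_n) : u != v -> (0 < cdist u v)%N.
Proof.
move=> uv; rewrite cdistE; have := ltn_ord u; have := ltn_ord v.
have : (u : nat) != v by [].

case: (leqP u v); lia.
Qed.

Lemma cdist_sym n (u v : 'I_n) : u != v -> cdist v u = (n - cdist u v)%N.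
Proof.
move=> uv; rewrite !cdistE; have := ltn_ord u; have := ltn_ord v.
have : (u : nat) != v by [].

case: (leqP u v); case: (leqP v u); lia.
Qed.

Lemma big_rot_mod (R : Type) (idx : R) (op : Monoid.com_law idx) m i (F : nat -> R) :
  (i <= m)%N ->
  \big[op/idx]_(0 <= k < m) F ((i + k) %% m)%N = \big[op/idx]_(0 <= k < m) F k.
Proof.
move=> im.
rewrite (@big_cat_nat _ _ _ (m - i) 0 m) /= ?leq_subr //.
have -> : \big[op/idx]_(0 <= k < m - i) F ((i + k) %% m)%N =
          \big[op/idx]_(0 <= k < m - i) F (k + i)%N.
  apply: eq_big_nat => k /andP[_ Hk]; rewrite modn_small; first by rewrite addnC.
  lia.
rewrite -(big_addn 0 m i (fun _ => true) F) add0n.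
have -> : \big[op/idx]_(m - i <= k < m) F ((i + k) %% m)%N =
          \big[op/idx]_(0 + (m - i) <= k < m) F (k - (m - i))%N.
  rewrite add0n; apply: eq_big_nat => k /andP[H1 H2].
  have -> : (i + k = (k - (m - i)) + m)%N by lia.
  rewrite modnDr modn_small //; lia.
rewrite (big_addn 0 m (m - i) (fun _ => true)).
have -> : (m - (m - i) = i)%N by lia.
have -> : \big[op/idx]_(0 <= k < i) F (k + (m - i) - (m - i))%N =
          \big[op/idx]_(0 <= k < i) F k by apply: eq_bigr => k _; rewrite addnK.
rewrite Monoid.mulmC -big_cat_nat //.
Qed.

Section Enum.
Variables (n : nat) (A : {set 'I_n}) (x0 : 'I_n).
Local Notation m := #|A|.
Local Notation rk := (rank_in A).

Lemma rank_lt u : u \in A -> (rk u < m)%N.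
Proof.
move=> uA; apply: proper_card; apply/properP; split.
  by apply/subsetP => x; rewrite inE => /andP[].
by exists u => //; rewrite inE ltnn andbF.
Qed.

Lemma rank_mono u v : u \in A -> v \in A -> (u < v)%N -> (rk u < rk v)%N.
Proof.
move=> uA vA uv; apply: proper_card; apply/properP; split.
  apply/subsetP => x; rewrite !inE => /andP[-> /= xu]; exact: ltn_trans xu uv.
by exists u; rewrite !inE ?uA ?uv // ltnn andbF.
Qed.

Lemma rank_inj : {in A &, injective rk}.
Proof.
move=> u v uA vA e; apply/val_inj => /=.
case: (ltngtP u v) => // H.
  by have := rank_mono uA vA H; rewrite e ltnn.
by have := rank_mono vA uA H; rewrite e ltnn.
Qed.

Lemma rank_surj j : (j < m)%N -> exists2 u, u \in A & rk u = j.
Proof.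
move=> jm; move Em : m jm => m' jm.
case: m' Em jm => // m' Em jm.
pose f u := (inord (rk u) : 'I_m'.+1).
have finj : {in A &, injective f}.
  move=> u v uA vA; rewrite /f => /(congr1 val) /=.
  rewrite !inordK -?Em ?rank_lt //.
  exact: rank_inj.
have : f @: A = setT.
  by apply/eqP; rewrite eqEcard subsetT cardsT card_ord (card_in_imset finj) Em ltnSn.
move=> fA.
have : (inord j : 'I_m'.+1) \in f @: A by rewrite fA inE.
case/imsetP => u uA; rewrite /f => /(congr1 val) /=.
rewrite (inordK jm) inordK; last by rewrite -Em rank_lt.
move=> ->.
by exists u.
Qed.

Definition ee j := odflt x0 [pick u in A | rk u == j].

Lemma ee_spec j : (j < m)%N -> ee j \in A /\ rk (ee j) = j.
Proof.
move=> jm; rewrite /ee; case: pickP => [u /andP[uA /eqP ->] //| none].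
have [u uA ru] := rank_surj jm.
by have := none u; rewrite uA ru eqxx.
Qed.

Lemma ee_in j : (j < m)%N -> ee j \in A.
Proof. by move=> /ee_spec[]. Qed.

Lemma ee_rank_of j : (j < m)%N -> rk (ee j) = j.
Proof. by move=> /ee_spec[]. Qed.

Lemma ee_rank u : u \in A -> ee (rk u) = u.
Proof.
move=> uA; have [H1 H2] := ee_spec (rank_lt uA).
exact: rank_inj.
Qed.

Lemma ee_mono i j : (i < j)%N -> (j < m)%N -> (ee i < ee j)%N.
Proof.
move=> ij jm; have im := ltn_trans ij jm.
case: (ltngtP (ee i) (ee j)) => // H.
  have := rank_mono (ee_in jm) (ee_in im) H.
  by rewrite !ee_rank_of //; lia.
have : ee i = ee j by apply/val_inj.
move/(congr1 rk); rewrite !ee_rank_of //; lia.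
Qed.

Lemma ee_inj i j : (i < m)%N -> (j < m)%N -> ee i = ee j -> i = j.
Proof.
move=> im jm /(congr1 rk); by rewrite !ee_rank_of.
Qed.

Lemma big_enumA (R : Type) (idx : R) (op : Monoid.com_law idx) (F : 'I_n -> R) :
  \big[op/idx]_(u in A) F u = \big[op/idx]_(0 <= i < m) F (ee i).
Proof.
have HA : A =i [set ee (val i) | i : 'I_m].
  move=> u; apply/idP/imsetP.
    by move=> uA; exists (Ordinal (rank_lt uA)) => //; rewrite ee_rank.
  by case=> i _ ->; apply: ee_in (ltn_ord i).
rewrite (eq_bigl (fun u => u \in [set ee (val i) | i : 'I_m])) //.
rewrite big_imset /=.
  by rewrite big_mkord; apply: eq_bigl => i; rewrite inE.
move=> i j _ _ e; apply/val_inj; exact: ee_inj (ltn_ord i) (ltn_ord j) e.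
Qed.

End Enum.

Section Enum2.
Variables (n : nat) (A : {set 'I_n}) (x0 : 'I_n).
Local Notation m := #|A|.
Local Notation e := (ee A x0).

Definition D k i := cdist (e i) (e ((i + k) %% m)).

Lemma modm_rel i k : (i < m)%N -> (k < m)%N ->
  ((i + k) %% m = if (i + k < m)%N then i + k else i + k - m)%N.
Proof.
move=> im km; case: ltnP => H; first by rewrite modn_small.
have -> : (i + k = (i + k - m) + m)%N by lia.
rewrite modnDr modn_small; lia.
Qed.

Lemma modm_neq i k : (0 < k < m)%N -> (i < m)%N -> ((i + k) %% m)%N != i.
Proof.
move=> /andP[k0 km] im; rewrite modm_rel //; case: ltnP; lia.
Qed.

Lemma D_id k i : (k < m)%N -> (i < m)%N ->
  (D k i + e i = e ((i + k) %% m) + (if (m <= i + k)%N then n else 0))%N.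
Proof.
move=> km im; rewrite /D cdistE modm_rel //.
have := ltn_ord (e i).
case: (ltnP (i + k) m) => H.
  have : (e i <= e (i + k))%N.
    case: (posnP k) => [->|kp]; first by rewrite addn0.
    by apply: ltnW; apply: ee_mono => //; lia.
  move=> le; rewrite le; lia.
have : (e (i + k - m) < e i)%N by apply: ee_mono => //; lia.
move=> lt ltn; rewrite leqNgt lt /=; lia.
Qed.

Lemma sum_D k : (k < m)%N -> (\sum_(0 <= i < m) D k i = k * n)%N.
Proof.
move=> km.
have H : (\sum_(0 <= i < m) (D k i + e i) =
          \sum_(0 <= i < m) (e ((i + k) %% m) + (if (m <= i + k)%N then n else 0)))%N.
  by apply: eq_big_nat => i /andP[_ im]; rewrite D_id.
rewrite !big_split /= in H.
have E1 : (\sum_(0 <= i < m) e ((i + k) %% m) = \sum_(0 <= i < m) e i)%N.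
  rewrite -(big_rot_mod _ (fun j => (e j : nat)) (ltnW km)).
  by apply: eq_bigr => i _; rewrite addnC.
have E2 : (\sum_(0 <= i < m) (if (m <= i + k)%N then n else 0) = k * n)%N.
  rewrite (@big_cat_nat _ _ _ (m - k) 0 m) ?leq_subr //=.
  have -> : (\sum_(0 <= i < m - k) (if (m <= i + k)%N then n else 0) =
             \sum_(0 <= i < m - k) 0)%N.
    by apply: eq_big_nat => i /andP[_ Hi]; case: ifP => //; lia.
  have -> : (\sum_(m - k <= i < m) (if (m <= i + k)%N then n else 0) =
             \sum_(m - k <= i < m) n)%N.
    by apply: eq_big_nat => i /andP[Hi _]; case: ifP => //; lia.
  by rewrite !sum_nat_const_nat muln0 add0n subKn // ltnW.
rewrite E1 E2 [X in _ = X]addnC in H; exact: addIn H.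
Qed.

Lemma D_range k i : (0 < k < m)%N -> (i < m)%N -> (0 < D k i < n)%N.
Proof.
move=> km im; rewrite /D cdist_lt andbT; apply: cdist_pos.
have m0 : (0 < m)%N by lia.
apply/negP => /eqP /(ee_inj im (ltn_pmod _ m0)) H.
by have := modm_neq km im; rewrite -H eqxx.
Qed.

End Enum2.

Section Enum3.
Variables (n : nat) (A : {set 'I_n}) (x0 : 'I_n).
Local Notation m := #|A|.
Local Notation e := (ee A x0).

Lemma span_D k i : (0 < k < m)%N -> (i < m)%N ->
  span_in A (e i) (e ((i + k) %% m)) = k.
Proof.
move=> /andP[k0 km] im.
have m0 : (0 < m)%N by lia.
rewrite /span_in !ee_rank_of ?ltn_pmod //.
rewrite modnDml.
have -> : (i + k + (m - i) = k + m)%N by lia.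
rewrite modnDr modn_small //.
by case: eqP => //; lia.
Qed.

Lemma span_inv u v k : u \in A -> v \in A -> (k < m)%N ->
  span_in A u v = k -> v = e ((rank_in A u + k) %% m).
Proof.
move=> uA vA km.
have ju := rank_lt uA; have jv := rank_lt vA.
rewrite /span_in.
set i := rank_in A u; set j := rank_in A v.
case: eqP => [_ | r0] H; first by lia.
rewrite -H modnDmr.
have -> : (i + (j + (m - i)) = j + m)%N by lia.
by rewrite modnDr modn_small // ee_rank.
Qed.

Lemma sigma_valsP k d : (0 < k < m)%N ->
  sigma_vals A k d <-> exists2 i, (i < m)%N & D A x0 k i = d.
Proof.
move=> km; have km' : (k < m)%N by case/andP: km.
split.
  rewrite /sigma_vals.
  case/existsP => u /andP[uA /existsP[v /andP[vA /and3P[uv /eqP sp /eqP cd]]]].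
  exists (rank_in A u); first exact: rank_lt.
  by rewrite /D ee_rank // -(span_inv uA vA km' sp).
case=> i im <-; rewrite /sigma_vals.
apply/existsP; exists (e i); rewrite ee_in //=.
have m0 : (0 < m)%N by lia.
apply/existsP; exists (e ((i + k) %% m)); rewrite ee_in ?ltn_pmod //=.
rewrite span_D // eqxx /= /D eqxx andbT.
apply/negP => /eqP /(ee_inj im (ltn_pmod _ m0)) H.
by have := modm_neq km im; rewrite -H eqxx.
Qed.

End Enum3.

Lemma sum_le_nat m (f g : nat -> nat) :
  (forall i, (i < m)%N -> (f i <= g i)%N) ->
  (\sum_(0 <= i < m) f i <= \sum_(0 <= i < m) g i)%N.
Proof.
move=> H; rewrite big_nat_cond [X in (_ <= X)%N]big_nat_cond.
by apply: leq_sum => i /andP[/andP[_ im] _]; apply: H.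
Qed.

Lemma sum_lt_nat m (f g : nat -> nat) i0 :
  (forall i, (i < m)%N -> (f i <= g i)%N) -> (i0 < m)%N -> (f i0 < g i0)%N ->
  (\sum_(0 <= i < m) f i < \sum_(0 <= i < m) g i)%N.
Proof.
move=> H im lt.
have im' := ltnW im.
rewrite (@big_cat_nat _ _ _ i0 0 m) // [X in (_ < X)%N](@big_cat_nat _ _ _ i0 0 m) //.
rewrite (@big_ltn _ _ _ i0 m f) // (@big_ltn _ _ _ i0 m g) //.
have H1 : (\sum_(0 <= i < i0) f i <= \sum_(0 <= i < i0) g i)%N.
  by apply: sum_le_nat => i ii; apply: H; lia.
have H2 : (\sum_(i0.+1 <= i < m) f i <= \sum_(i0.+1 <= i < m) g i)%N.
  rewrite big_nat_cond [X in (_ <= X)%N]big_nat_cond.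
  by apply: leq_sum => i /andP[/andP[_ ii] _]; apply: H.
have H3 : (f i0 + \sum_(i0.+1 <= i < m) f i < g i0 + \sum_(i0.+1 <= i < m) g i)%N.
  rewrite -addSn; exact: leq_add lt H2.
rewrite -addnS; exact: leq_add H1 H3.
Qed.

Section Conv.
Variables (R : realType) (h : nat -> R) (lo hi : nat).
Hypothesis lohi : (lo < hi)%N.
Local Open Scope ring_scope.
Hypothesis hconv : forall x, (lo < x)%N -> (x < hi)%N -> h x *+ 2 < h x.-1 + h x.+1.

Definition Dl x := h x.+1 - h x.

Lemma Dl_step x : (lo <= x)%N -> (x.+2 <= hi)%N -> Dl x < Dl x.+1.
Proof.
move=> H1 H2; have := @hconv x.+1 H1 H2; rewrite /Dl /= mulr2n; lra.
Qed.

Lemma Dl_mono x y : (lo <= x)%N -> (x < y)%N -> (y < hi)%N -> Dl x < Dl y.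
Proof.
move=> lx; elim: y => // y IH xy yh.
case: (ltngtP x y) => [xy'|xy'|xy'].
- apply: lt_trans (IH xy' _) (Dl_step _ _); lia.
- lia.
- by rewrite -xy'; apply: Dl_step; lia.
Qed.

Definition phi c x := h x - h c - Dl c * (x%:R - c%:R).

Lemma phi_step c x : phi c x.+1 = phi c x + (Dl x - Dl c).
Proof. rewrite /phi /Dl -addn1 natrD; ring. Qed.

Lemma phi_c c : phi c c = 0.
Proof. rewrite /phi; ring. Qed.

Lemma phi_c1 c : phi c c.+1 = 0.
Proof. rewrite /phi /Dl -addn1 natrD; ring. Qed.

Lemma phi_high c t : (lo <= c)%N -> (c + t.+2 <= hi)%N -> 0 < phi c (c + t.+2).
Proof.
move=> lc; elim: t => [|t IH] H.
  rewrite addn2 phi_step phi_c1 add0r subr_gt0; apply: Dl_step; lia.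
rewrite addnS phi_step; apply: addr_gt0; first by apply: IH; lia.
rewrite subr_gt0; apply: Dl_mono; lia.
Qed.

Lemma phi_low c t x : (lo <= x)%N -> (x + t.+1 = c)%N -> (c < hi)%N -> 0 < phi c x.
Proof.
elim: t x => [|t IH] x lx xc ch.
  have : phi c x.+1 = 0 by rewrite addn1 in xc; rewrite xc phi_c.
  rewrite phi_step => H.
  have : Dl x < Dl c by apply: Dl_mono; lia.
  lra.
have := IH x.+1 ltac:(lia) ltac:(lia) ch.
rewrite phi_step => H.
have : Dl x < Dl c by apply: Dl_mono; lia.
lra.
Qed.

Lemma phi_ge0 c x : (lo <= c)%N -> (c < hi)%N -> (lo <= x <= hi)%N -> 0 <= phi c x.
Proof.
move=> lc ch /andP[lx xh].
case: (ltnP x c) => H.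
  apply: ltW; apply: (@phi_low c (c - x.+1) x) => //; lia.
case: (leqP x c.+1) => H2.
  have HH : x = c \/ x = c.+1 by lia.
  by case: HH => ->; rewrite ?phi_c ?phi_c1.
have -> : x = c + (x - c.+2).+2 by lia.
apply: ltW; apply: phi_high => //; lia.
Qed.

Lemma phi_eq0 c x : (lo <= c)%N -> (c < hi)%N -> (lo <= x <= hi)%N ->
  phi c x = 0 <-> (c <= x <= c.+1)%N.
Proof.
move=> lc ch /andP[lx xh]; split.
  move=> H0; apply/negPn/negP => Hn.
  case: (ltnP x c) => H.
    have := @phi_low c (c - x.+1) x lx ltac:(lia) ch; rewrite H0; lra.
  have E : x = c + (x - c.+2).+2 by lia.
  rewrite E in H0.
  have := @phi_high c (x - c.+2) lc ltac:(lia); rewrite H0; lra.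
move=> H.
have HH : x = c \/ x = c.+1 by lia.
  by case: HH => ->; rewrite ?phi_c ?phi_c1.
Qed.

Lemma sum_phi c m (d : nat -> nat) :
  \sum_(0 <= i < m) h (d i) = \sum_(0 <= i < m) phi c (d i) + h c *+ m
    + Dl c * ((\sum_(0 <= i < m) d i)%N%:R - c%:R *+ m).
Proof.
elim: m => [|m IH]; first by rewrite !big_geq // !mulr0n; ring.
rewrite !big_nat_recr //= IH natrD !mulrS /phi; ring.
Qed.


Lemma conv_sum m (d : nat -> nat) Sm :
  (0 < m)%N -> (forall i, (i < m)%N -> (lo <= d i <= hi)%N) ->
  (\sum_(0 <= i < m) d i)%N = Sm ->
  h (Sm %/ m)%N *+ (m - Sm %% m) + h (Sm %/ m).+1 *+ (Sm %% m) <= \sum_(0 <= i < m) h (d i) /\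
  (\sum_(0 <= i < m) h (d i) = h (Sm %/ m)%N *+ (m - Sm %% m) + h (Sm %/ m).+1 *+ (Sm %% m) <->
   forall i, (i < m)%N -> (Sm %/ m <= d i <= (Sm %/ m).+1)%N).
Proof.
move=> m0 dr HS.
have Slo : (lo * m <= Sm)%N.
  have := @sum_le_nat m (fun _ => lo) d (fun i im => proj1 (andP (dr i im))).
  by rewrite sum_nat_const_nat subn0 mulnC HS.
have Shi : (Sm <= hi * m)%N.
  have := @sum_le_nat m d (fun _ => hi) (fun i im => proj2 (andP (dr i im))).
  by rewrite sum_nat_const_nat subn0 mulnC HS.
have lq : (lo <= Sm %/ m)%N by rewrite leq_divRL.
have qh : (Sm %/ m <= hi)%N.
  by rewrite -(mulnK hi m0); apply: leq_div2r.
move: (divn_eq Sm m) (ltn_pmod Sm m0) lq qh.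
set q := (Sm %/ m)%N; set r := (Sm %% m)%N; clearbody q r => Sdef rm lq qh.
have sum_ge0 c : (lo <= c)%N -> (c < hi)%N -> 0 <= \sum_(0 <= i < m) phi c (d i).
  move=> lc ch; rewrite big_nat_cond; apply: sumr_ge0 => i /andP[/andP[_ im] _].
  exact: phi_ge0 (dr i im).
have sum_eq0 c : (lo <= c)%N -> (c < hi)%N ->
    \sum_(0 <= i < m) phi c (d i) = 0 <-> forall i, (i < m)%N -> (c <= d i <= c.+1)%N.
  move=> lc ch; split.
    move=> H i im; apply/(phi_eq0 lc ch (dr i im)).
    rewrite big_mkord in H.
    have := psumr_eq0P (P := predT) (F := fun i : 'I_m => phi c (d i))
      (fun j _ => phi_ge0 lc ch (dr j (ltn_ord j))) H.
    by move=> /(_ (Ordinal im) isT).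
  move=> H; rewrite big_mkord big1 // => i _.
  exact/(phi_eq0 lc ch (dr i (ltn_ord i)))/H.
case: (ltnP q hi) => qh'.
  have E := sum_phi q m d.
  rewrite HS Sdef natrD natrM mulr_natr in E.
  have EB : h q *+ (m - r) + h q.+1 *+ r = h q *+ m + Dl q * r%:R.
    rewrite /Dl mulrnBr ?(ltnW rm) //; ring.
  rewrite EB E.
  have G := sum_ge0 q lq qh'.
  split; first by lra.
  rewrite -(sum_eq0 q lq qh'); split => H; lra.
have qe : q = hi by lia.
have r0 : r = 0%N by rewrite qe in Sdef; lia.
have qc : q = q.-1.+1 by lia.
move: qc; set c := q.-1; clearbody c => qc.
have hic : hi = c.+1 by lia.
clear qe; subst q r.
have lc : (lo <= c)%N by lia.
have ch : (c < hi)%N by lia.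
have E := sum_phi c m d.
rewrite HS Sdef natrD natrM mulr_natr in E.
have EB : h c.+1 *+ (m - 0) + h c.+2 *+ 0 = \sum_(0 <= i < m) h (d i) - \sum_(0 <= i < m) phi c (d i).
  rewrite E /Dl subn0 mulr0n addr0; ring.
rewrite EB.
have G := sum_ge0 c lc ch.
split; first by lra.
have -> : \sum_(0 <= i < m) h (d i) = \sum_(0 <= i < m) h (d i) - \sum_(0 <= i < m) phi c (d i)
   <-> \sum_(0 <= i < m) phi c (d i) = 0.
  by split => H; lra.
rewrite (sum_eq0 c lc ch); split => H i im.
  have := H i im; case/andP => H1 H2.
  apply/andP; split; last by lia.
  case: (ltnP c (d i)) => // H3.
  have : (Sm < Sm)%N.
    rewrite -{1}HS [X in (_ < X)%N]Sdef addn0.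
    have -> : (c.+1 * m = \sum_(0 <= i < m) c.+1)%N by rewrite sum_nat_const_nat subn0 mulnC.
    apply: (@sum_lt_nat m d (fun _ => c.+1) i) => //.
      by move=> j jm; case/andP: (H j jm).
  lia.
have := H i im; have := dr i im; clear E EB G; lia.
Qed.

End Conv.

Local Open Scope ring_scope.
Definition hh (R : realType) (n : nat) (g : R -> R) (d : nat) : R :=
  g (minn d (n - d))%:R.

Lemma cycdist_h (R : realType) n (g : R -> R) (u v : 'I_n) :
  u != v -> g (cycdist u v)%:R = hh n g (cdist u v).
Proof. by move=> uv; rewrite /cycdist (cdist_sym uv). Qed.

Local Close Scope ring_scope.
Section Energy.
Variables (R : realType) (n : nat) (g : R -> R) (A : {set 'I_n}) (x0 : 'I_n).
Local Open Scope ring_scope.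
Local Notation m := #|A|.
Local Notation e := (ee A x0).

Lemma ee_ltE i j : (i < m)%N -> (j < m)%N -> (e i < e j)%N = (i < j)%N.
Proof.
move=> im jm; case: (ltnP i j) => H; first exact: ee_mono.
rewrite leq_eqVlt in H; case/orP: H => [/eqP->|ji]; first by rewrite ltnn.
by apply/negbTE; rewrite -leqNgt; apply: ltnW; apply: ee_mono.
Qed.

Lemma ee_neq k i : (0 < k < m)%N -> (i < m)%N -> e i != e ((i + k) %% m)%N.
Proof.
move=> km im; have m0 : (0 < m)%N by lia.
apply/negP => /eqP /(ee_inj im (ltn_pmod _ m0)) H.
by have := modm_neq km im; rewrite -H eqxx.
Qed.

Let G i j := g (cycdist (e i) (e j))%:R.

Lemma energy_G : energy g A =
  \sum_(0 <= i < m) \sum_(0 <= j < m) (if (i < j)%N then G i j else 0).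
Proof.
rewrite /energy (big_enumA A x0); apply: eq_big_nat => i /andP[_ im].
rewrite big_mkcondr /= (big_enumA A x0); apply: eq_big_nat => j /andP[_ jm].
by rewrite ee_ltE.
Qed.

Lemma G_sym i j : G i j = G j i.
Proof. by rewrite /G /cycdist minnC. Qed.

Lemma sum_G2 :
  (\sum_(0 <= i < m) \sum_(0 <= j < m) (if (i < j)%N then G i j else 0)) *+ 2 =
  \sum_(0 <= i < m) \sum_(0 <= j < m) (if i != j then G i j else 0).
Proof.
have E : \sum_(0 <= i < m) \sum_(0 <= j < m) (if (j < i)%N then G i j else 0) =
         \sum_(0 <= i < m) \sum_(0 <= j < m) (if (i < j)%N then G i j else 0).
  rewrite exchange_big_nat; apply: eq_bigr => i _; apply: eq_bigr => j _.
  by rewrite G_sym.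
rewrite mulr2n -[X in _ + X = _]E -big_split /=.
apply: eq_bigr => i _; rewrite -big_split /=; apply: eq_bigr => j _.
by case: (ltngtP i j) => H; rewrite ?addr0 ?add0r ?eqxx // neq_ltn H ?orbT.
Qed.

Lemma sum_neq_rot i : (i < m)%N ->
  \sum_(0 <= j < m) (if i != j then G i j else 0) =
  \sum_(1 <= k < m) G i ((i + k) %% m)%N.
Proof.
move=> im; have m0 : (0 < m)%N by lia.
rewrite -(big_rot_mod _ (fun j => if i != j then G i j else 0) (ltnW im)).
rewrite big_ltn // addn0 modn_small // eqxx /= Monoid.mul1m.
apply: eq_big_nat => k /andP[k1 km].
have kk : (0 < k < m)%N by apply/andP.
rewrite eq_sym; have := modm_neq kk im.
by move=> /negbTE ->.
Qed.

Lemma energy_D : energy g A *+ 2 =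
  \sum_(1 <= k < m) \sum_(0 <= i < m) hh n g (D A x0 k i).
Proof.
rewrite energy_G sum_G2.
rewrite (eq_big_nat _ _ (F2 := fun i => \sum_(1 <= k < m) G i ((i + k) %% m)%N)); last first.
  by move=> i /andP[_ im]; rewrite sum_neq_rot.
rewrite exchange_big_nat; apply: eq_big_nat => k /andP[k1 km].
apply: eq_big_nat => i /andP[_ im].
by rewrite /G cycdist_h // ee_neq // k1.
Qed.

End Energy.

Section Main.
Variables (R : realType) (n : nat) (g : R -> R).
Local Open Scope ring_scope.
Hypothesis n3 : (3 <= n)%N.
Hypothesis gdec : strictly_decreasing_on 1%:R (n./2)%:R g.
Hypothesis gconv : strictly_convex_on 1%:R (n./2)%:R g.

Lemma itv_nat a : (1 <= a)%N -> (a <= n./2)%N -> Defs.in_itv 1%:R (n./2)%:R (a%:R : R).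
Proof. by move=> H1 H2; rewrite /Defs.in_itv !ler_nat H1 H2. Qed.

Lemma gdec_nat a b : (1 <= a)%N -> (a < b)%N -> (b <= n./2)%N -> g b%:R < g a%:R.
Proof.
move=> H1 H2 H3; apply: gdec; rewrite ?ltr_nat //; apply: itv_nat => //; lia.
Qed.

Lemma gconv_nat a b c : (1 <= a)%N -> b = a.+1 -> c = a.+2 -> (c <= n./2)%N ->
  g b%:R *+ 2 < g a%:R + g c%:R.
Proof.
move=> H1 -> -> H3.
have H4 : (a <= n./2)%N by apply: leq_trans H3; apply: leq_trans (leqnSn _) (leqnSn _).
have H5 : (1 <= a.+2)%N by [].
have := @gconv a%:R a.+2%:R 2^-1 (itv_nat H1 H4) (itv_nat H5 H3).
have hne : (a%:R : R) != a.+2%:R by rewrite eqr_nat; lia.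
have h2 : (0 : R) < 2^-1 by rewrite invr_gt0.
have h3 : (2^-1 : R) < 1 by rewrite invf_lt1 // ltr1n.
move=> /(_ hne h2 h3).
have -> : 2^-1 * a%:R + (1 - 2^-1) * a.+2%:R = a.+1%:R :> R by field.
move=> H.
have H' : g a.+1%:R * 2 < (2^-1 * g a%:R + (1 - 2^-1) * g a.+2%:R) * 2.
  by rewrite ltr_pM2r.
have E : (2^-1 * g a%:R + (1 - 2^-1) * g a.+2%:R) * 2 = g a%:R + g a.+2%:R by field.
rewrite E in H'; rewrite mulr2n; lra.
Qed.

Lemma hh_conv x : (1 < x)%N -> (x < n.-1)%N ->
  hh n g x *+ 2 < hh n g x.-1 + hh n g x.+1.
Proof.
move=> x1 xn; rewrite /hh.
case: (leqP (x.*2 + 2) n) => HA.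
  have -> : (minn x.-1 (n - x.-1) = x.-1)%N by lia.
  have -> : (minn x (n - x) = x)%N by lia.
  have -> : (minn x.+1 (n - x.+1) = x.+1)%N by lia.
  apply: gconv_nat; lia.
case: (leqP (n + 2) x.*2) => HB.
  have -> : (minn x.-1 (n - x.-1) = (n - x).+1)%N by lia.
  have -> : (minn x (n - x) = n - x)%N by lia.
  have -> : (minn x.+1 (n - x.+1) = (n - x).-1)%N by lia.
  rewrite addrC; apply: gconv_nat; lia.
case: (ltngtP x.*2 n) => HC.
- have HD : x.*2.+1 = n by lia.
  have -> : (minn x.-1 (n - x.-1) = x.-1)%N by lia.
  have -> : (minn x (n - x) = x)%N by lia.
  have -> : (minn x.+1 (n - x.+1) = x)%N by lia.
  have := @gdec_nat x.-1 x ltac:(lia) ltac:(lia) ltac:(lia).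
  rewrite mulr2n; lra.
- have HD : x.*2 = n.+1 by lia.
  have -> : (minn x.-1 (n - x.-1) = x.-1)%N by lia.
  have -> : (minn x (n - x) = x.-1)%N by lia.
  have -> : (minn x.+1 (n - x.+1) = x.-2)%N by lia.
  have := @gdec_nat x.-2 x.-1 ltac:(lia) ltac:(lia) ltac:(lia).
  rewrite mulr2n; lra.
- have -> : (minn x.-1 (n - x.-1) = x.-1)%N by lia.
  have -> : (minn x (n - x) = x)%N by lia.
  have -> : (minn x.+1 (n - x.+1) = x.-1)%N by lia.
  have := @gdec_nat x.-1 x ltac:(lia) ltac:(lia) ltac:(lia).
  rewrite mulr2n; lra.
Qed.


Definition Bk m k := hh n g ((k * n) %/ m)%N *+ (m - (k * n) %% m)
  + hh n g ((k * n) %/ m).+1 *+ ((k * n) %% m).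
Definition LB m := \sum_(1 <= k < m) Bk m k.
Definition balanced (A : {set 'I_n}) x0 := forall k, (0 < k < #|A|)%N ->
  forall i, (i < #|A|)%N -> ((k * n) %/ #|A| <= D A x0 k i <= ((k * n) %/ #|A|).+1)%N.

Lemma Bk_le (A : {set 'I_n}) x0 k : (0 < k < #|A|)%N ->
  Bk #|A| k <= \sum_(0 <= i < #|A|) hh n g (D A x0 k i) /\
  (\sum_(0 <= i < #|A|) hh n g (D A x0 k i) = Bk #|A| k <->
   forall i, (i < #|A|)%N -> ((k * n) %/ #|A| <= D A x0 k i <= ((k * n) %/ #|A|).+1)%N).
Proof.
move=> km.
have lohi : (1 < n.-1)%N by lia.
have m0 : (0 < #|A|)%N by lia.
have dr : forall i, (i < #|A|)%N -> (1 <= D A x0 k i <= n.-1)%N.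
  move=> i im; have := D_range x0 km im; lia.
have km' : (k < #|A|)%N by lia.
have HS := sum_D x0 km'.
exact: (conv_sum lohi hh_conv m0 dr HS).
Qed.

Lemma M1 (A : {set 'I_n}) x0 :
  LB #|A| <= energy g A *+ 2 /\ (energy g A *+ 2 = LB #|A| <-> balanced A x0).
Proof.
rewrite (energy_D g A x0) /LB; split.
  rewrite big_nat_cond [X in _ <= X]big_nat_cond; apply: ler_sum => k /andP[kr _].
  have kk : (0 < k < #|A|)%N by lia.
  exact: (Bk_le x0 kk).1.
split.
  move=> H k km i im.
  have HF : \sum_(1 <= k < #|A|) (\sum_(0 <= i < #|A|) hh n g (D A x0 k i) - Bk #|A| k) = 0.
    by rewrite sumrB H subrr.
  move: HF; rewrite big_nat_cond => /eqP; rewrite psumr_eq0; last first.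
    move=> j /andP[jr _]; rewrite subr_ge0.
    have jj : (0 < j < #|A|)%N by lia.
    exact: (Bk_le x0 jj).1.
  move=> /allP /(_ k); rewrite mem_index_iota.
  have kr : (1 <= k < #|A|)%N by lia.
  rewrite kr /= => /(_ isT); rewrite subr_eq0 => /eqP Hk.
  exact: (proj1 (proj2 (Bk_le x0 km)) Hk i im).
move=> bal; apply: eq_big_nat => k kr.
have kk : (0 < k < #|A|)%N by lia.
by apply/(Bk_le x0 kk).2 => i im; apply: bal.
Qed.


Lemma M2 (A : {set 'I_n}) x0 : balanced A x0 <-> maximally_even A.
Proof.
split.
  move=> bal k hk; have km : (0 < k < #|A|)%N by lia.
  have km' : (k < #|A|)%N by lia.
  set q := ((k * n) %/ #|A|)%N.
  have bnd : forall d, sigma_vals A k d -> (q <= d <= q.+1)%N.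
    by move=> d /(sigma_valsP x0 d km) [i im <-]; apply: bal.
  case: (boolP [exists i : 'I_#|A|, D A x0 k i == q.+1]) => E1.
    case: (boolP [exists i : 'I_#|A|, D A x0 k i == q]) => E2.
      right; exists q; split.
        by move=> d /bnd Hd; lia.
      case/existsP: E1 => i1 /eqP H1; case/existsP: E2 => i2 /eqP H2.
      by split; apply/(sigma_valsP x0 _ km); [exists i2 | exists i1].
    left; exists q.+1 => d Hd; have := bnd d Hd.
    move/(sigma_valsP x0 d km): Hd => [i im Hi].
    have : D A x0 k i != q.
      by apply/negP => /eqP Hq; move/existsP: E2; apply; exists (Ordinal im); rewrite Hq.
    rewrite Hi; lia.
  left; exists q => d Hd; have := bnd d Hd.
  move/(sigma_valsP x0 d km): Hd => [i im Hi].
  have : D A x0 k i != q.+1.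
    by apply/negP => /eqP Hq; move/existsP: E1; apply; exists (Ordinal im); rewrite Hq.
  rewrite Hi; lia.
move=> me k km i im.
have hk : (1 <= k <= #|A| - 1)%N by lia.
have km' : (k < #|A|)%N by lia.
have m0 : (0 < #|A|)%N by lia.
have HS := sum_D x0 km'.
have allv : forall c, (forall d, sigma_vals A k d -> d = c \/ d = c.+1) ->
    forall j, (j < #|A|)%N -> (c <= D A x0 k j <= c.+1)%N.
  move=> c Hc j jm.
  have : sigma_vals A k (D A x0 k j) by apply/(sigma_valsP x0 _ km); exists j.
  move/Hc; lia.
case: (me k hk) => [[c Hc] | [c [Hc [Sc Sc1]]]].
  have allc : forall j, (j < #|A|)%N -> D A x0 k j = c.
    move=> j jm; apply: Hc; apply/(sigma_valsP x0 _ km); by exists j.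
  have Hsum : (\sum_(0 <= j < #|A|) D A x0 k j = c * #|A|)%N.
    rewrite (eq_big_nat _ _ (F2 := fun _ => c)); last by move=> j /andP[_ jm]; apply: allc.
    by rewrite sum_nat_const_nat subn0 mulnC.
  have -> : ((k * n) %/ #|A| = c)%N by rewrite -HS Hsum mulnK.
  by rewrite allc // leqnn leqnSn.
have [j0 j0m Hj0] := proj1 (sigma_valsP x0 c km) Sc.
have Hall := allv c Hc.
have L1 : (c * #|A| <= k * n)%N.
  rewrite -HS; have := @sum_le_nat #|A| (fun _ => c) (D A x0 k).
  rewrite sum_nat_const_nat subn0 mulnC; apply => j jm.
  by case/andP: (Hall j jm).
have L2 : (k * n < c.+1 * #|A|)%N.
  rewrite -HS; have := @sum_lt_nat #|A| (D A x0 k) (fun _ => c.+1) j0.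
  rewrite sum_nat_const_nat subn0 mulnC; apply => //.
    by move=> j jm; case/andP: (Hall j jm).
  by rewrite Hj0.
have -> : ((k * n) %/ #|A| = c)%N.
  apply/eqP; rewrite eqn_leq; apply/andP; split.
    by rewrite -ltnS ltn_divLR.
  by rewrite leq_divRL.
exact: Hall.
Qed.


Lemma card_lt_ord m i : (i <= m)%N -> #|[set j : 'I_m | (j < i)%N]| = i.
Proof.
move=> im.
have -> : [set j : 'I_m | (j < i)%N] = [set widen_ord im j | j : 'I_i].
  apply/setP => j; rewrite inE; apply/idP/imsetP.
    by move=> ji; exists (Ordinal ji) => //; apply: val_inj.
  by case=> j' _ ->; rewrite /= ltn_ord.
by rewrite card_imset ?card_ord // => a b /(congr1 val) /= H; apply: val_inj.
Qed.

Lemma exists_bal m x0 : (m <= n)%N -> exists B : {set 'I_n}, #|B| = m /\ balanced B x0.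
Proof.
move=> mn.
case: (posnP m) => [->|m0].
  exists set0; split; first by rewrite cards0.
  by move=> k; rewrite cards0; lia.
pose f i := ((i * n) %/ m)%N.
have fmono : forall i j, (i < j)%N -> (f i < f j)%N.
  move=> i j ij; rewrite /f -addn1.
  have -> : ((i * n) %/ m + 1 = (i * n + 1 * m) %/ m)%N by rewrite divnDMl.
  apply: leq_div2r; nia.
have flt : forall i, (i < m)%N -> (f i < n)%N.
  by move=> i im; rewrite /f ltn_divLR // mulnC ltn_pmul2l //; lia.
pose elem i := insubd x0 (f i) : 'I_n.
have velem : forall i, (i < m)%N -> val (elem i) = f i.
  by move=> i im; rewrite val_insubd flt.
have fle : forall i j, (i < m)%N -> (j < m)%N -> (elem j < elem i)%N -> (j < i)%N.
  move=> i j im jm; rewrite !velem //; case: (ltnP j i) => // H.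
  rewrite leq_eqVlt in H; case/orP: H => [/eqP->|H]; first by rewrite ltnn.
  by move=> H'; have := fmono _ _ H; lia.
pose B := [set elem (val i) | i : 'I_m].
have einj : {in [set j : 'I_m | (j < m)%N] &, injective (fun i : 'I_m => elem i)}.
  move=> i j _ _ /(congr1 val); rewrite !velem // => H.
  apply: val_inj => /=; case: (ltngtP i j) => // H'; have := fmono _ _ H'; lia.
have einj' : injective (fun i : 'I_m => elem i).
  by move=> i j; apply: einj; rewrite inE ltn_ord.
have cardB : #|B| = m by rewrite card_imset // card_ord.
have inB : forall i, (i < m)%N -> elem i \in B.
  by move=> i im; apply/imsetP; exists (Ordinal im).
have rkB : forall i, (i < m)%N -> rank_in B (elem i) = i.
  move=> i im; rewrite /rank_in.
  have -> : [set b in B | (b < elem i)%N] =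
            [set elem (val j) | j in [set j : 'I_m | (j < i)%N]].
    apply/setP => b; rewrite !inE; apply/andP/imsetP.
      case=> /imsetP[j _ ->] lt; exists j; rewrite ?inE //.
      exact: fle im (ltn_ord j) lt.
    case=> j; rewrite inE => ji ->; split; first exact: inB (ltn_ord j).
    have jm : (val j < m)%N by apply: ltn_ord.
    by rewrite !velem //; apply: fmono.
  rewrite card_imset //; exact: card_lt_ord (ltnW im).
have eeB : forall j, (j < m)%N -> ee B x0 j = elem j.
  move=> j jm; rewrite -{1}(rkB j jm); apply: ee_rank; exact: inB.
exists B; split => //.
move=> k; rewrite cardB => km i im.
have km' : (k < #|B|)%N by rewrite cardB; lia.
have im' : (i < #|B|)%N by rewrite cardB.
have Did := D_id x0 km' im'.
rewrite cardB in Did.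
have imod : ((i + k) %% m < m)%N by rewrite ltn_pmod.
rewrite !eeB // !velem // in Did.
have key : (D B x0 k i + f i = ((i + k) * n) %/ m)%N.
  rewrite Did; case: (ltnP (i + k) m) => H.
    by rewrite modn_small // addn0.
  have -> : (i + k = (i + k - m) + m)%N by lia.
  rewrite modnDr modn_small; last by lia.
  rewrite /f -divnDMl //; congr (_ %/ _)%N; nia.
rewrite mulnDl divnD // in key.
have bb := leq_b1 (m <= (i * n) %% m + (k * n) %% m)%N.
move: key bb; rewrite /f; lia.
Qed.

End Main.

Unset Implicit Arguments.

Theorem mainTheorem5 (R : realType) (n : nat) (g : R -> R) (A : {set 'I_n}) :
  (3 <= n)%N ->
  strictly_decreasing_on 1%:R (n./2)%:R g ->
  strictly_convex_on 1%:R (n./2)%:R g ->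
  is_minimizer g A <-> maximally_even A.
Proof.
move=> n3 gdec gconv.
have n0 : (0 < n)%N by lia.
pose x0 := Ordinal n0.
have mn : (#|A| <= n)%N by have := max_card A; rewrite card_ord.
have [B [cB balB]] := exists_bal n3 x0 mn.
have [HA1 HA2] := M1 n3 gdec gconv A x0.
have [HB1 HB2] := M1 n3 gdec gconv B x0.
have EB := proj2 HB2 balB; rewrite cB in EB.
split.
  move=> minA; apply: (proj1 (M2 n3 A x0)); apply: (proj1 HA2).
  apply/eqP; rewrite eq_le HA1 andbT -EB.
  by rewrite ler_pMn2r //; apply: minA.
move=> me B' cB'.
have EA := proj2 HA2 (proj2 (M2 n3 A x0) me).
have [HB'1 _] := M1 n3 gdec gconv B' x0; rewrite cB' in HB'1.
by rewrite -(ler_pMn2r (n := 2)) // EA.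
Qed.
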